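(* Let $\Pi$ and $\Pi'$ be $n$-dimensional linear spaces, both satisfying the exchange axiom and the axiom (P2), and let $0<k<n-1$. Then every injection of $\mathcal{G}_{k}(\Pi)$ to $\mathcal{G}_{k}(\Pi')$ sending base subsets to base subsets is adjacency preserving, i.e. it sends any two adjacent elements of $\mathcal{G}_k(\Pi)$ to adjacent elements of $\mathcal{G}_k(\Pi')$.
   Context: A linear space $\Pi=(P,\mathcal{L})$ is a set $P$ of points with a family $\mathcal{L}$ of proper subsets (lines) such that each line has at least two points and any two distinct points $p,q$ lie on exactly one line $pq$. A subspace is a set $S\subset P$ with $pq\subset S$ for all distinct $p,q\in S$; $\overline{X}$ is the smallest subspace containing $X$. A set $X$ is independent if $\overline{X}$ is not spanned by a proper subset of $X$; a base of a subspace $S$ is an independent set spanning $S$. A subspace is $m$-dimensional if $m+1$ is the smallest number of points spanning it. Exchange axiom: for every $X\subset P$ and $p_1,p_2\in P\setminus\overline{X}$, $p_2\in\overline{X\cup\{p_1\}}$ implies $p_1\in\overline{X\cup\{p_2\}}$. Axiom (P2): every line contains at least three points. $\mathcal{G}_k(\Pi)$ is the set of $k$-dimensional subspaces; two elements of $\mathcal{G}_k(\Pi)$ are adjacent if their intersection is $(k-1)$-dimensional. For a base $B$ of $\Pi$, the base subset of $\mathcal{G}_k(\Pi)$ associated with $B$ is the set of all $k$-dimensional subspaces spanned by points of $B$. *)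

(* Defs.v *)
(* Point sets are predicates [P -> Prop]; lines form a family
   [L : (P -> Prop) -> Prop]. Set equality is Leibniz equality of predicates
   (extensional via functional/propositional extensionality). *)
From Stdlib Require Import List.
Set Implicit Arguments.

Section LinearSpaces.
Variable P : Type.
Variable L : (P -> Prop) -> Prop.

Definition subset (A B : P -> Prop) : Prop := forall x, A x -> B x.

Definition linear_space : Prop :=
  (forall l, L l -> exists x, ~ l x) /\
  (forall l, L l -> exists p q, p <> q /\ l p /\ l q) /\
  (forall p q, p <> q -> exists l, L l /\ l p /\ l q /\
      forall l', L l' -> l' p -> l' q -> l' = l).

Definition subspace (S : P -> Prop) : Prop :=
  forall p q, p <> q -> S p -> S q ->
    forall l, L l -> l p -> l q -> subset l S.

Definition closure (X : P -> Prop) : P -> Prop :=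
  fun x => forall S, subspace S -> subset X S -> S x.

Definition set_of_list (s : list P) : P -> Prop := fun x => In x s.

Definition spanned_by_card (k : nat) (S : P -> Prop) : Prop :=
  exists s : list P, NoDup s /\ length s = k /\ closure (set_of_list s) = S.

Definition dim (S : P -> Prop) (m : nat) : Prop :=
  subspace S /\ spanned_by_card (Datatypes.S m) S /\
  (forall j, j < Datatypes.S m -> ~ spanned_by_card j S).

Definition Grass (k : nat) (S : P -> Prop) : Prop := dim S k.

Definition adjacent (k : nat) (S T : P -> Prop) : Prop :=
  Grass k S /\ Grass k T /\ dim (fun x => S x /\ T x) (pred k).

Definition exchange_axiom : Prop :=
  forall (X : P -> Prop) p1 p2,
    ~ closure X p1 -> ~ closure X p2 ->
    closure (fun x => X x \/ x = p1) p2 ->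
    closure (fun x => X x \/ x = p2) p1.

Definition axiom_P2 : Prop :=
  forall l, L l -> exists p q r, l p /\ l q /\ l r /\ p <> q /\ p <> r /\ q <> r.

Definition independent (X : P -> Prop) : Prop :=
  ~ exists Y, subset Y X /\ (exists x, X x /\ ~ Y x) /\ closure Y = closure X.

Definition base (B : P -> Prop) : Prop :=
  independent B /\ closure B = (fun _ => True).

Definition base_subset (k : nat) (B : P -> Prop) : (P -> Prop) -> Prop :=
  fun S => Grass k S /\ exists Y, subset Y B /\ closure Y = S.

Definition ndim (n : nat) : Prop := dim (fun _ => True) n.
End LinearSpaces.

(* Main.v *)
Require Import Defs.
From Stdlib Require Import List Classical ClassicalEpsilon FunctionalExtensionality PropExtensionality FinFun.
From mathcomp Require Import all_boot all_fingroup zify.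
Require Import Defs.
Set Implicit Arguments.
Unset Strict Implicit.
Unset Printing Implicit Defensive.

Section Core.
#[local] Set Default Proof Using "All".
Variable N : nat.
Implicit Types (i j : 'I_N) (J S T : {set 'I_N}).

Lemma exists_subset_card (R : {set 'I_N}) m : m <= #|R| ->
  exists R0 : {set 'I_N}, R0 \subset R /\ #|R0| = m.
Proof.
elim: m => [|m IH] Hm; first by exists set0; rewrite sub0set cards0.
have [R0 [HR0 Hc]] := IH (ltnW Hm).
have : ~~ (R \subset R0).
  apply/negP => H; have := subset_leq_card H; lia.
case/subsetPn => x xR xR0.
exists (x |: R0); split; first by rewrite subUset sub1set xR HR0.
by rewrite cardsU1 xR0 Hc.
Qed.

Lemma exists_Kset K (In Out : {set 'I_N}) : In :&: Out = set0 ->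
  #|In| <= K -> K + #|Out| <= N ->
  exists J : {set 'I_N}, #|J| = K /\ In \subset J /\ J :&: Out = set0.
Proof.
move=> Hd HI HO.
set R := ~: (In :|: Out).
have cR : #|R| + #|In :|: Out| = N by rewrite addnC cardsC card_ord.
have cU : #|In :|: Out| = #|In| + #|Out|.
  have := cardsUI In Out. rewrite Hd cards0. lia.
have [R0 [HR0 c0]] := @exists_subset_card R (K - #|In|) ltac:(lia).
have R0P : forall x, x \in R0 -> (x \notin In) && (x \notin Out).
  by move=> x /(subsetP HR0); rewrite !inE negb_or.
exists (In :|: R0); split; [|split].
- have dIR : In :&: R0 = set0.
    apply/setP => x; rewrite !inE; case xR: (x \in R0); last by rewrite andbF.
    by have /andP [/negbTE -> _] := R0P x xR.
  have := cardsUI In R0. rewrite dIR cards0. lia.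
- exact: subsetUl.
- apply/setP => x; rewrite !inE.
  case xO : (x \in Out); rewrite ?andbF ?andbT //.
  have : x \notin In :&: Out by rewrite Hd inE.
  rewrite inE xO andbT => /negbTE ->; rewrite /=.
  by apply/negP => /R0P; rewrite xO andbF.
Qed.

Variable K : nat.
Hypothesis HK : 2 <= K.
Hypothesis HKN : K + 2 <= N.

Definition C i j := [set J : {set 'I_N} | (#|J| == K) && (i \in J) && (j \notin J)].

Lemma C_le i j i' j' : i != j -> i' != j' -> #|C i j| <= #|C i' j'|.
Proof.
move=> Hij Hij'.
pose t1 := tperm i i'. pose a := t1 j. pose s := fun x => tperm a j' (t1 x).
have sinj : injective s by move=> x y /perm_inj /perm_inj.
have si : s i = i'.
  rewrite /s /t1 tpermL tpermD //.
  - rewrite /a /t1; apply/eqP => E. have : tperm i i' j = tperm i i' i by rewrite tpermL.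
    move/perm_inj => E2. by rewrite E2 eqxx in Hij.
  - by rewrite eq_sym.
have sj : s j = j' by rewrite /s -/a tpermL.
rewrite -(card_imset (C i j) (imset_inj sinj)).
apply: subset_leq_card; apply/subsetP => J' /imsetP [J HJ ->].
move: HJ; rewrite !inE => /andP [/andP [cJ iJ] jJ].
by rewrite (card_imset _ sinj) cJ -si -sj !(mem_imset _ _ sinj) iJ jJ.
Qed.

Lemma C_eq i j i' j' : i != j -> i' != j' -> C i j = C i' j' -> i = i' /\ j = j'.
Proof.
move=> Hij Hij' E.
have inC : forall J, #|J| = K -> J \in C i j -> J \in C i' j' by move=> J _; rewrite E.
case: (eqVneq i i') => [Ei|Ni].
- subst i'; split => //.
  case: (eqVneq j j') => // Nj.
  have h1 : [set i; j'] :&: [set j] = set0.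
    apply/setP => x; rewrite !inE; case: (eqVneq x j) => [->|_]; last by rewrite andbF.
    by rewrite andbT (eq_sym j i) (negbTE Hij) (negbTE Nj).
  have h2 : #|[set i; j']| <= K by rewrite cards2; case: (i == j'); lia.
  have h3 : K + #|[set j]| <= N by rewrite cards1; lia.
  have [J [cJ [sJ dJ]]] := exists_Kset h1 h2 h3.
  have : J \in C i j.
    rewrite inE cJ eqxx /= (subsetP sJ) ?inE ?eqxx //=.
    apply/negP => jJ. have : j \in J :&: [set j] by rewrite !inE jJ eqxx.
    by rewrite dJ inE.
  move/(inC _ cJ); rewrite inE => /andP [_ H0]; move: H0; rewrite (subsetP sJ) // !inE eqxx orbT.
  done.
- have h1 : [set i] :&: [set j; i'] = set0.
    apply/setP => x; rewrite !inE; case: (eqVneq x i) => [->|_] //=.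
    by rewrite (negbTE Hij) (negbTE Ni).
  have h2 : #|[set i]| <= K by rewrite cards1; lia.
  have h3 : K + #|[set j; i']| <= N by rewrite cards2; case: (j == i'); lia.
  have [J [cJ [sJ dJ]]] := exists_Kset h1 h2 h3.
  have : J \in C i j.
    rewrite inE cJ eqxx /= (subsetP sJ) ?inE ?eqxx //=.
    apply/negP => jJ. have : j \in J :&: [set j; i'] by rewrite !inE jJ eqxx.
    by rewrite dJ inE.
  move/(inC _ cJ); rewrite inE => /andP [/andP [_ i'J] _].
  have : i' \in J :&: [set j; i'] by rewrite !inE i'J eqxx orbT.
  by rewrite dJ inE.
Qed.

Variable g : {set 'I_N} -> {set 'I_N}.
Hypothesis gK : forall J, #|J| = K -> #|g J| = K.
Hypothesis ginj : forall J1 J2, #|J1| = K -> #|J2| = K -> g J1 = g J2 -> J1 = J2.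
Hypothesis gsurj : forall J', #|J'| = K -> exists J, #|J| = K /\ g J = J'.
Hypothesis H : forall i j, i != j -> exists i' j', i' != j' /\
  forall J, #|J| = K -> ~~ ((i \in J) && (j \notin J)) -> ~~ ((i' \in g J) && (j' \notin g J)).

Lemma ginjC i j : {in C i j &, injective g}.
Proof. by move=> J1 J2; rewrite !inE => /andP[/andP[/eqP c1 _] _] /andP[/andP[/eqP c2 _] _]; apply: ginj. Qed.

Lemma gC i j : i != j -> exists i' j', i' != j' /\ g @: C i j = C i' j'.
Proof.
move=> Hij; have [i' [j' [Hij' Hg]]] := H Hij.
exists i', j'; split => //; apply/eqP; rewrite eq_sym eqEcard; apply/andP; split.
- apply/subsetP => J'; rewrite inE => /andP [/andP [/eqP cJ' iJ'] jJ'].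
  have [J [cJ E]] := gsurj cJ'.
  apply/imsetP; exists J => //.
  rewrite inE cJ eqxx /=. apply/negPn/negP => HJ.
  have := Hg J cJ HJ; by rewrite E iJ' jJ'.
- rewrite (card_in_imset (@ginjC i j)); exact: C_le.
Qed.

Definition valid (p : 'I_N * 'I_N) := p.1 != p.2.

Definition phi (p : 'I_N * 'I_N) : 'I_N * 'I_N :=
  odflt p [pick q | valid q && (g @: C p.1 p.2 == C q.1 q.2)].

Lemma phiP p : valid p -> valid (phi p) /\ g @: C p.1 p.2 = C (phi p).1 (phi p).2.
Proof.
move=> vp; rewrite /phi; case: pickP => [q /andP [vq /eqP E]|Hn] //=.
have [i' [j' [v E]]] := gC vp.
by have := Hn (i', j'); rewrite /valid /= v E eqxx.
Qed.

Lemma phi_inj : {in valid &, injective phi}.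
Proof.
move=> p q vp vq E.
have [vp' Ep] := phiP vp; have [vq' Eq] := phiP vq.
have E2 : C p.1 p.2 = C q.1 q.2.
  have sub : forall a b, valid a -> valid b -> g @: C a.1 a.2 = g @: C b.1 b.2 ->
     C a.1 a.2 \subset C b.1 b.2.
    move=> a b va vb Eab; apply/subsetP => J HJ.
    have : g J \in g @: C b.1 b.2 by rewrite -Eab; apply/imsetP; exists J.
    case/imsetP => J2 HJ2 EJ.
    move: HJ HJ2; rewrite !inE => /andP[/andP[/eqP c1 _] _] H2.
    move: (H2) => /andP[/andP[/eqP c2 _] _].
    by rewrite (ginj c1 c2 EJ).
  apply/eqP; rewrite eqEsubset !sub //; by rewrite Ep Eq E.
have [e1 e2] := C_eq vp vq E2.
by rewrite [p]surjective_pairing [q]surjective_pairing e1 e2.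
Qed.

Definition Pairs S T := [set p : 'I_N * 'I_N | valid p && (S \in C p.1 p.2) && (T \in C p.1 p.2)].

Lemma Pairs_card S T : #|S| = K -> #|T| = K ->
  #|Pairs S T| = #|S :&: T| * (N - #|S :|: T|).
Proof.
move=> cS cT.
have -> : Pairs S T = setX (S :&: T) (~: (S :|: T)).
  apply/setP => [[a b]]; rewrite !inE /valid /= cS cT eqxx /=.
  case: (eqVneq a b) => [->|] /=; first by case: (b \in S); case: (b \in T).
  by case: (a \in S); case: (a \in T); case: (b \in S); case: (b \in T).
rewrite cardsX; have := cardsC (S :|: T); rewrite card_ord => E.
by rewrite -[X in _ = _ * (X - _)]E addKn.
Qed.

Lemma Pairs_le S T : #|S| = K -> #|T| = K -> #|Pairs S T| <= #|Pairs (g S) (g T)|.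
Proof.
move=> cS cT.
have vP : {subset Pairs S T <= valid}.
  by move=> p; rewrite inE => /andP [/andP [v _] _].
rewrite -(card_in_imset (f := phi) (D := Pairs S T)); last first.
  by move=> p q /vP vp /vP vq; exact: phi_inj.
apply: subset_leq_card; apply/subsetP => q /imsetP [p Hp ->].
move: (Hp); rewrite inE => /andP [/andP [vp HS] HT].
have [vq Eq] := phiP vp.
by rewrite inE vq -Eq !(imset_f g) //.
Qed.

Theorem core S T : #|S| = K -> #|T| = K -> #|S :&: T| = K.-1 ->
  #|g S :&: g T| = K.-1.
Proof.
move=> cS cT cST.
have cgS := gK cS; have cgT := gK cT.
have le1 := Pairs_le cS cT.
rewrite (Pairs_card cS cT) (Pairs_card cgS cgT) in le1.
have u1 := cardsUI S T. have u2 := cardsUI (g S) (g T).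
have mK : #|g S :&: g T| <= K by rewrite -cgS; apply: subset_leq_card; apply: subsetIl.
have mneq : #|g S :&: g T| != K.
  apply/negP => /eqP E.
  have E1 : g S :&: g T = g S.
    by apply/eqP; rewrite eqEcard subsetIl cgS E leqnn.
  have E2 : g S = g T.
    apply/eqP; rewrite eqEcard cgS cgT leqnn andbT.
    by rewrite -E1 subsetIr.
  have ST := ginj cS cT E2. subst T.
  by move: cST; rewrite setIid cS; lia.
have uN : #|g S :|: g T| <= N by have := max_card (mem (g S :|: g T)); rewrite card_ord.
set m := #|g S :&: g T| in mK mneq u2 le1 *.
set u := #|g S :|: g T| in u2 uN le1 *.
have uST : #|S :|: T| = K + 1 by lia.
rewrite uST cST in le1.
have : m <> K by move/eqP; rewrite (negbTE mneq).
move=> {mneq} mneq.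
nia.
Qed.
End Core.


Lemma pext (T : Type) (A B : T -> Prop) : (forall x, A x <-> B x) -> A = B.
Proof.
move=> H; apply: functional_extensionality => x; apply: propositional_extensionality; exact: H.
Qed.

Definition pb (A : Prop) : bool := if excluded_middle_informative A then true else false.
Lemma pbE (A : Prop) : pb A = true <-> A.
Proof. by rewrite /pb; case: excluded_middle_informative. Qed.

Lemma In_mem (T : eqType) (x : T) (s : seq T) : In x s <-> x \in s.
Proof.
elim: s => [|y s IH] //=; rewrite in_cons; split.
- by case=> [->|/IH ->]; rewrite ?eqxx ?orbT.
- by case/orP => [/eqP ->|/IH]; [left|right].
Qed.

Lemma uniq_NoDup (T : eqType) (s : seq T) : uniq s -> NoDup s.
Proof.
elim: s => [|y s IH] /=; first by constructor.
by case/andP => ys us; constructor; [move/In_mem; apply/negP|apply: IH].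
Qed.

Lemma size_length (T : Type) (s : seq T) : size s = length s.
Proof. by elim: s => //= x s ->. Qed.

Lemma exists_max (Q : nat -> Prop) M : Q 0 -> (forall m, Q m -> m <= M) ->
  exists m, Q m /\ forall m', Q m' -> m' <= m.
Proof.
move=> Q0 HM.
suff: forall d m, Q m -> M - m <= d -> exists m0, Q m0 /\ forall m', Q m' -> m' <= m0.
  by move=> H; apply: (H M 0) => //; lia.
elim=> [|d IH] m Qm Hd.
- exists m; split => // m' /HM; lia.
- case: (classic (exists m', Q m' /\ m < m')) => [[m' [Qm' lt]]|H].
  + apply: (IH m') => //; have := HM _ Qm'; lia.
  + exists m; split => // m' Qm'; rewrite leqNgt; apply/negP => lt; apply: H; by exists m'.
Qed.

Lemma not_and_neq (T : Type) (x a b : T) : ~ (x <> a /\ x <> b) -> x = a \/ x = b.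
Proof. move=> H; case: (classic (x = a)) => [|na]; [by left|right]; apply: NNPP => nb; exact: H. Qed.

Definition img (T : Type) (N : nat) (B : 'I_N -> T) (J : {set 'I_N}) : T -> Prop :=
  fun x => exists i, i \in J /\ B i = x.

Section Geo.
#[local] Set Default Proof Using "All".
Variables (P : Type) (L : (P -> Prop) -> Prop) (n : nat).
Hypothesis Hex : exchange_axiom L.
Hypothesis Hdim : ndim L n.

Local Notation cl := (closure L).
Local Notation sol := (@set_of_list P).
Implicit Types (J : {set 'I_n.+1}) (B : 'I_n.+1 -> P).

Lemma cl_ext X : subset X (cl X).
Proof. by move=> x Xx S _ XS; apply: XS. Qed.

Lemma cl_subspace X : subspace L (cl X).
Proof.
move=> p q pq Hp Hq l Ll lp lq x lx S HS XS.
exact: (HS p q pq (Hp S HS XS) (Hq S HS XS) l Ll lp lq x lx).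
Qed.

Lemma cl_min X S : subspace L S -> subset X S -> subset (cl X) S.
Proof. by move=> HS XS x Hx; apply: Hx. Qed.

Lemma cl_mono2 X Y : subset X (cl Y) -> subset (cl X) (cl Y).
Proof. by move=> H; apply: cl_min => //; apply: cl_subspace. Qed.

Lemma cl_mono X Y : subset X Y -> subset (cl X) (cl Y).
Proof. by move=> H; apply: cl_mono2 => x /H; apply: cl_ext. Qed.

Lemma cl_id S : subspace L S -> cl S = S.
Proof.
move=> HS; apply: pext => x; split; first exact: cl_min.
exact: cl_ext.
Qed.

Lemma cl_empty : cl (fun _ => False) = (fun _ => False).
Proof. by apply: cl_id => p q _ []. Qed.

Lemma cl_single p : cl (fun x => x = p) = (fun x => x = p).
Proof. by apply: cl_id => a b ab Ha Hb; exfalso; apply: ab; rewrite Ha Hb. Qed.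

Lemma line_sub S l p q : subspace L S -> L l -> l p -> l q -> p <> q -> S p -> S q ->
  subset l S.
Proof. by move=> HS Ll lp lq pq Sp Sq; apply: (HS p q). Qed.

Definition indepL (F : list P) := NoDup F /\
  forall f, In f F -> ~ cl (fun y => In y F /\ y <> f) f.

Lemma steinitz (E : list P) : forall (X : P -> Prop) (F : list P), NoDup F ->
  (forall f, In f F -> ~ cl (fun y => X y \/ (In y F /\ y <> f)) f) ->
  (forall f, In f F -> cl (fun y => X y \/ In y E) f) -> length F <= length E.
Proof.
elim: E => [|y E0 IH] X F ndF indF spF.
- case: F ndF indF spF => [|f F'] //= ndF indF spF; exfalso.
  apply: (indF f (or_introl erefl)); apply: cl_mono (spF f (or_introl erefl)).
  by move=> z [Xz|[]]; left.
- case: (classic (forall f, In f F -> cl (fun z => X z \/ In z E0) f)) => [H|H].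
  + by have := IH X F ndF indF H => /= ?; lia.
  + have [f Hf] := not_all_ex_not _ _ H.
    have [Ff nf] := imply_to_and _ _ Hf.
    set X0 := fun z => X z \/ In z E0.
    have ny : ~ cl X0 y.
      move=> Hy; apply: nf; apply: (cl_mono2 (Y := X0)) (spF f Ff).
      move=> z [Xz|[<-|Ez]] //; apply: cl_ext; by [left|right].
    have hy : cl (fun z => X0 z \/ z = f) y.
      apply: Hex => //; apply: cl_mono (spF f Ff).
      by move=> z [Xz|[<-|Ez]]; [left;left|right|left;right].
    have [F1 [F2 EF]] := in_split f F Ff; subst F.
    have nd' := NoDup_remove_1 _ _ _ ndF.
    have nf' := NoDup_remove_2 _ _ _ ndF.
    have IF : forall z, In z (F1 ++ F2) -> In z (F1 ++ f :: F2).
      move=> z Hz; apply: in_or_app; case: (in_app_or _ _ _ Hz) => ?; [left|right;right] => //.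
    suff: length (F1 ++ F2) <= length E0 by rewrite !length_app /=; lia.
    apply: (IH (fun z => X z \/ z = f) (F1 ++ F2) nd').
    * move=> f' Hf' Hcl; apply: (indF f' (IF _ Hf')); apply: cl_mono Hcl.
      move=> z [[Xz|->]|[Hz nz]]; [by left| |by right; split => //; apply: IF].
      right; split; first by apply: in_or_app; right; left.
      by move=> E; subst; apply: nf'.
    * move=> f' Hf'; apply: cl_mono2 (spF f' (IF _ Hf')).
      move=> z [Xz|[<-|Ez]]; [by apply: cl_ext; left; left| |by apply: cl_ext; right].
      apply: cl_mono hy. by move=> w [[Xw|Ew]|->]; [left;left|right|left;right].
Qed.

Lemma steinitz0 (E F : list P) : indepL F -> (forall f, In f F -> cl (sol E) f) ->
  length F <= length E.
Proof.
move=> [nd ind] sp; apply: (steinitz (X := fun _ => False)) nd _ _.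
- move=> f Ff H; apply: (ind f Ff); apply: cl_mono H; by move=> z [[]|].
- move=> f Ff; apply: cl_mono (sp f Ff); by move=> z Hz; right.
Qed.

Lemma ndim_list : exists s0, NoDup s0 /\ length s0 = n.+1 /\ cl (sol s0) = (fun _ => True).
Proof. by case: Hdim => _ [[s0 [? [? ?]]] _]; exists s0. Qed.

Lemma indep_le F : indepL F -> length F <= n.+1.
Proof.
move=> HF; have [s0 [_ [<- Hs]]] := ndim_list.
by apply: steinitz0 => // f _; rewrite Hs.
Qed.

Lemma span_ge F : NoDup F -> cl (sol F) = (fun _ => True) -> n.+1 <= length F.
Proof.
move=> nd HF; case: Hdim => _ [_ Hmin].
rewrite leqNgt; apply/negP => Hlt.
apply: (Hmin (length F)); first by apply/ltP.
by exists F.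
Qed.

Lemma indep_cons F x : indepL F -> ~ cl (sol F) x -> indepL (x :: F).
Proof.
move=> [nd ind] nx; split.
- constructor; last done. move=> Hx; apply: nx; exact: cl_ext.
- move=> f [<-|Ff] Hcl.
  + apply: nx; apply: cl_mono Hcl. by move=> z [[->|?] nz].
  + set X0 := fun y => In y F /\ y <> f.
    have nf : ~ cl X0 f by apply: ind.
    have nx0 : ~ cl X0 x by move=> H; apply: nx; apply: cl_mono H => z [].
    have H : cl (fun y => X0 y \/ y = f) x.
      apply: Hex nx0 nf _. apply: cl_mono Hcl.
      move=> z [[<-|Fz] nz]; [by right|by left].
    apply: nx; apply: cl_mono H; by move=> z [[]|->].
Qed.

Lemma indep_sub F G : NoDup F -> (forall x, In x F -> In x G) -> indepL G -> indepL F.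
Proof.
move=> nd FG [_ ind]; split => // f Ff H; apply: (ind f (FG f Ff)).
apply: cl_mono H; by move=> z [Fz nz]; split => //; apply: FG.
Qed.

Lemma extend F : indepL F -> exists G, indepL G /\ (forall x, In x F -> In x G) /\
  cl (sol G) = (fun _ => True) /\ length G = n.+1.
Proof.
move=> HF; have Hle := indep_le HF.
move: {2}(n.+1 - length F) (leqnn (n.+1 - length F)) => d.
elim: d F HF Hle => [|d IH] F HF Hle Hd.
- case: (classic (forall x, cl (sol F) x)) => [H|H].
  + have E : cl (sol F) = (fun _ => True) by apply: pext.
    exists F; split => //; split => //; split => //.
    have := span_ge HF.1 E; lia.
  + have [x nx] := not_all_ex_not _ _ H.
    have := indep_le (indep_cons HF nx) => /=; lia.
- case: (classic (forall x, cl (sol F) x)) => [H|H].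
  + have E : cl (sol F) = (fun _ => True) by apply: pext.
    exists F; split => //; split => //; split => //.
    have := span_ge HF.1 E; lia.
  + have [x nx] := not_all_ex_not _ _ H.
    have HF' := indep_cons HF nx.
    have [G [HG [FG HG']]] := IH (x :: F) HF' (indep_le HF') ltac:(simpl; lia).
    exists G; split => //; split => // z Fz; apply: FG; by right.
Qed.

Lemma minspan_indep S m s : dim L S m -> NoDup s -> length s = m.+1 ->
  cl (sol s) = S -> indepL s.
Proof.
move=> [_ [_ Hmin]] nd ls Hs; split => // f Ff Hf.
have [s1 [s2 E]] := in_split f s Ff; subst s.
apply: (Hmin m); first by apply/ltP.
exists (s1 ++ s2); split; first exact: NoDup_remove_1 nd.
split; first by move: ls; rewrite !length_app /=; lia.
rewrite -Hs; apply: pext => x; split.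
- apply: cl_mono => z Hz; apply: in_or_app; case: (in_app_or _ _ _ Hz) => ?; [left|right;right] => //.
- apply: cl_mono2 => z Hz.
  case: (classic (z = f)) => [->|nz].
  + apply: cl_mono Hf => w [Hw nw]; case: (in_app_or _ _ _ Hw) => Hw'.
    * by apply: in_or_app; left.
    * by apply: in_or_app; right; case: Hw' => // E; case: nw.
  + apply: cl_ext; case: (in_app_or _ _ _ Hz) => Hz'; apply: in_or_app; [by left|right].
    by case: Hz' => // E; case: nz.
Qed.

Lemma dim_spanned S m : dim L S m -> exists s, NoDup s /\ length s = m.+1 /\
  cl (sol s) = S /\ indepL s.
Proof.
move=> HS; case: (HS) => _ [[s [nd [ls Hs]]] _].
exists s; do 3!split => //; exact: minspan_indep HS nd ls Hs.
Qed.

Lemma dim_subspace S m : dim L S m -> subspace L S.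
Proof. by case. Qed.

Lemma fill S m F : dim L S m -> indepL F -> length F = m.+1 ->
  (forall x, In x F -> S x) -> cl (sol F) = S.
Proof.
move=> HS HF lF FS; have [s [nd [ls [Hs Is]]]] := dim_spanned HS.
apply: pext => x; split; first by apply: cl_min => //; apply: dim_subspace HS.
rewrite -Hs; apply: cl_mono2 => z sz.
apply: NNPP => nz.
have HzF := indep_cons HF nz.
have := steinitz0 (E := s) HzF.
have : length (z :: F) <= length s; last by rewrite /= lF ls; lia.
apply: steinitz0 => // w [<-|Fw]; first by apply: cl_ext.
by rewrite Hs; apply: FS.
Qed.

Lemma dim_of_indep F m : indepL F -> length F = m.+1 -> dim L (cl (sol F)) m.
Proof.
move=> HF lF; split; first exact: cl_subspace.
split; first by exists F; split => //; case: HF.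
move=> j /ltP jlt [s [nd [ls Hs]]].
have : length F <= length s.
  apply: steinitz0 => // f Ff; rewrite Hs; exact: cl_ext.
lia.
Qed.

Lemma dim_uniq S m m' : dim L S m -> dim L S m' -> m = m'.
Proof.
move=> [_ [H1 M1]] [_ [H2 M2]].
case: (ltngtP m m') => // H.
- by case: (M2 m.+1) => //; apply/ltP.
- by case: (M1 m'.+1) => //; apply/ltP.
Qed.


Definition span (B : 'I_n.+1 -> P) (J : {set 'I_n.+1}) := cl (img B J).
Definition isbase (B : 'I_n.+1 -> P) := injective B /\
  (forall i, ~ cl (img B (setT :\ i)) (B i)) /\ (forall x, cl (img B setT) x).
Definition lst (B : 'I_n.+1 -> P) (J : {set 'I_n.+1}) := List.map B (enum J).

Lemma In_lst B J x : In x (lst B J) <-> img B J x.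
Proof.
rewrite /lst in_map_iff; split.
- by case=> i [<- /In_mem]; rewrite mem_enum => iJ; exists i.
- by case=> i [iJ <-]; exists i; split => //; apply/In_mem; rewrite mem_enum.
Qed.

Lemma lst_len B J : length (lst B J) = #|J|.
Proof. by rewrite /lst length_map cardE size_length. Qed.

Lemma lst_nd B J : injective B -> NoDup (lst B J).
Proof.
move=> Binj; apply: Injective_map_NoDup; first by move=> x y; apply: Binj.
apply: uniq_NoDup; exact: enum_uniq.
Qed.

Lemma sol_lst B J : sol (lst B J) = img B J.
Proof. apply: pext => x; exact: In_lst. Qed.

Lemma lst_indep B J : isbase B -> indepL (lst B J).
Proof.
move=> [Binj [Bind _]]; split; first exact: lst_nd.
move=> f /In_lst [i [iJ <-]] H; apply: (Bind i); apply: cl_mono H.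
move=> z [/In_lst [m [mJ <-]] nz]; exists m; split => //.
rewrite !inE andbT; apply/negP => /eqP E; subst; by apply: nz.
Qed.

Lemma span_dim B J m : isbase B -> #|J| = m.+1 -> dim L (span B J) m.
Proof.
move=> HB cJ; rewrite /span -sol_lst; apply: dim_of_indep; first exact: lst_indep.
by rewrite lst_len.
Qed.

Lemma span_mem B J i : isbase B -> span B J (B i) -> i \in J.
Proof.
move=> [Binj [Bind _]] H; apply/negPn/negP => iJ; apply: (Bind i); apply: cl_mono H.
move=> z [m [mJ <-]]; exists m; split => //; rewrite !inE andbT.
by apply/negP => /eqP E; subst; rewrite mJ in iJ.
Qed.

Lemma span_inj B J1 J2 : isbase B -> span B J1 = span B J2 -> J1 = J2.
Proof.
move=> HB E; apply/setP => i; apply/idP/idP => iJ; apply: (span_mem HB).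
- rewrite -E; apply: cl_ext; by exists i.
- rewrite E; apply: cl_ext; by exists i.
Qed.

Lemma span_all B : isbase B -> span B setT = (fun _ => True).
Proof. by move=> [_ [_ H]]; apply: pext => x; split => // _; apply: H. Qed.

Lemma span_monoJ B J1 J2 : J1 \subset J2 -> subset (span B J1) (span B J2).
Proof.
move=> H; apply: cl_mono => x [i [iJ <-]]; exists i; split => //; exact: (subsetP H).
Qed.

Lemma span_cap B J1 J2 x : isbase B -> span B J1 x -> span B J2 x -> span B (J1 :&: J2) x.
Proof.
move=> HB; move: {2}#|J1 :\: J2| (leqnn #|J1 :\: J2|) => d.
elim: d J1 => [|d IH] J1 Hd H1 H2.
- have : J1 :\: J2 == set0 by rewrite -cards_eq0; lia.
  rewrite setD_eq0 => /setIidPl ->; exact: H1.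
- case: (boolP (J1 \subset J2)) => [/setIidPl ->|]; first exact: H1.
  case/subsetPn => u uJ1 uJ2.
  set J1' := J1 :\ u.
  have Hd' : #|J1' :\: J2| <= d.
    have E : J1' :\: J2 = (J1 :\: J2) :\ u.
      by apply/setP => z; rewrite !inE; case: (z == u); case: (z \in J2).
    have uD : u \in J1 :\: J2 by rewrite inE uJ1 uJ2.
    have := cardsD1 u (J1 :\: J2); rewrite uD E; lia.
  have sub' : J1' :&: J2 \subset J1 :&: J2 by apply: setSI; apply: subD1set.
  case: (classic (span B J1' x)) => [Hx|nx].
  + exact: (span_monoJ sub' (IH J1' Hd' Hx H2)).
  + have nu : ~ cl (img B J1') (B u).
      move=> Hu; have := span_mem HB Hu; by rewrite !inE eqxx.
    have H3 : cl (fun y => img B J1' y \/ y = B u) x.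
      apply: cl_mono H1 => z [m [mJ <-]]; case: (eqVneq m u) => [->|mu]; first by right.
      left; exists m; by rewrite !inE mu mJ.
    have H4 := Hex nu nx H3.
    have : span B (J1' :|: J2) (B u).
      apply: cl_mono2 H4 => z [[m [mJ <-]]|->].
      * apply: cl_ext; exists m; by rewrite inE mJ.
      * apply: (span_monoJ (subsetUr J1' J2) H2).
    move/(span_mem HB); by rewrite !inE eqxx (negbTE uJ2).
Qed.

Lemma span_capE B J1 J2 : isbase B ->
  (fun x => span B J1 x /\ span B J2 x) = span B (J1 :&: J2).
Proof.
move=> HB; apply: pext => x; split; first by case=> ? ?; apply: span_cap.
move=> H; split; apply: (span_monoJ _ H); [exact: subsetIl|exact: subsetIr].
Qed.

Lemma span1 B i : span B [set i] = (fun x => x = B i).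
Proof.
rewrite /span -cl_single; congr cl; apply: pext => x; split.
- by case=> m [/set1P -> <-].
- by move=> ->; exists i; rewrite set11.
Qed.

Lemma span0 B : span B set0 = (fun _ => False).
Proof.
rewrite /span -cl_empty; congr cl; apply: pext => x; split => //.
by case=> m []; rewrite inE.
Qed.


Lemma basesub_char B k S : isbase B ->
  (base_subset L k (img B setT) S <-> exists J, #|J| = k.+1 /\ S = span B J).
Proof.
move=> HB; split.
- move=> [HG [Y [YB HY]]].
  set J := [set i | pb (Y (B i))].
  have EJ : img B J = Y.
    apply: pext => x; split.
    + by case=> i [iJ <-]; move: iJ; rewrite inE => /pbE.
    + move=> Yx; have [i [_ Ei]] := YB x Yx; exists i; split => //.
      by rewrite inE; apply/pbE; rewrite Ei.
  have ES : S = span B J by rewrite /span EJ HY.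
  exists J; split => //.
  have [s [nd [ls [Hs Is]]]] := dim_spanned HG.
  have le1 : length (lst B J) <= length s.
    apply: steinitz0; first exact: lst_indep.
    move=> f /In_lst Hf; rewrite Hs ES; exact: cl_ext.
  have le2 : length s <= length (lst B J).
    apply: steinitz0 => // f Ff; rewrite sol_lst -/(span B J) -ES -Hs; exact: cl_ext.
  rewrite lst_len in le1 le2; lia.
- move=> [J [cJ ->]]; split; first exact: span_dim.
  exists (img B J); split => // x [i [_ <-]]; by exists i.
Qed.

Lemma isbase_base B : isbase B -> base L (img B setT).
Proof.
move=> HB; case: (HB) => [Binj [Bind Bsp]]; split.
- move=> [Y [YX [[x [Xx nYx]] EY]]].
  case: Xx => m [_ Em]; subst x.
  apply: (Bind m).
  have : cl Y (B m) by rewrite EY; apply: Bsp.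
  apply: cl_mono => y Yy; have [m' [_ Em']] := YX y Yy.
  exists m'; split => //; rewrite !inE andbT; apply/negP => /eqP E; subst.
  by apply: nYx.
- by apply: pext => x; split => // _; apply: Bsp.
Qed.

Lemma list_isbase G : NoDup G -> length G = n.+1 -> indepL G ->
  cl (sol G) = (fun _ => True) ->
  exists B, isbase B /\ (forall x, In x G <-> exists i, B i = x).
Proof.
case: G => [|x0 G0] // nd lG [_ ind] Hsp.
set G := x0 :: G0 in nd lG ind Hsp *.
exists (fun i : 'I_n.+1 => List.nth i G x0).
have rng : forall x, In x G <-> exists i : 'I_n.+1, List.nth i G x0 = x.
  move=> x; split.
  - move=> Hx; have [m [mlt Em]] := In_nth _ _ x0 Hx.
    have mlt' : m < n.+1 by rewrite -lG; apply/ltP.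
    by exists (Ordinal mlt').
  - by case=> i <-; apply: nth_In; rewrite lG; apply/ltP.
have Binj : injective (fun i : 'I_n.+1 => List.nth i G x0).
  move=> i j E; apply: val_inj => /=.
  have := (proj1 (NoDup_nth G x0) nd) i j; apply; rewrite ?lG //; apply/ltP => //.
split => //; split => //; split.
- move=> i H; apply: (ind (List.nth i G x0)); first by apply/rng; exists i.
  apply: cl_mono H => y [m [mi <-]]; split; first by apply/rng; exists m.
  move/Binj => E; subst; by rewrite !inE eqxx in mi.
- move=> x; have : cl (sol G) x by rewrite Hsp.
  apply: cl_mono => y /rng [i Ei]; by exists i.
Qed.

Lemma base_isbase X : base L X -> exists B, isbase B /\ img B setT = X.
Proof.
move=> [HI Hcl].
have free : forall F, NoDup F -> (forall x, In x F -> X x) -> indepL F.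
  move=> F nd FX; split => // f Ff Hf; apply: HI.
  exists (fun z => X z /\ z <> f); split; first by move=> z [].
  split; first by exists f; split; [apply: FX|case].
  apply: pext => x; split; first by apply: cl_mono => z [].
  apply: cl_mono2 => z Xz; case: (classic (z = f)) => [->|nz].
  + by apply: cl_mono Hf => w [Fw nw]; split => //; apply: FX.
  + by apply: cl_ext.
set Q := fun m => exists F, NoDup F /\ (forall x, In x F -> X x) /\ length F = m.
have [m0 [[F0 [nd0 [FX0 l0]]] Hmax]] : exists m, Q m /\ forall m', Q m' -> m' <= m.
  apply: (exists_max (M := n.+1)).
  - by exists nil; split => //; constructor.
  - move=> m [F [nd [FX <-]]]; exact: indep_le (free F nd FX).
have EF : sol F0 = X.
  apply: pext => x; split; first exact: FX0.
  move=> Xx; apply: NNPP => nx.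
  have : Q m0.+1.
    exists (x :: F0); split; first by constructor.
    split; last by rewrite /= l0.
    by move=> z [<-|Fz]; [|apply: FX0].
  move/Hmax; lia.
have Hsp : cl (sol F0) = (fun _ => True) by rewrite EF.
have I0 := free F0 nd0 FX0.
have lF : length F0 = n.+1.
  have := indep_le I0; have := span_ge nd0 Hsp; lia.
have [B [HB rng]] := list_isbase nd0 lF I0 Hsp.
exists B; split => //; apply: pext => x; rewrite -EF; split.
- by case=> i [_ <-]; apply/rng; exists i.
- by move/rng => [i <-]; exists i.
Qed.

Lemma img_U1 B i J : img B (i |: J) = (fun y => B i = y \/ img B J y).
Proof.
apply: pext => y; split.
- case=> m [/setU1P [->|mJ] <-]; [by left|right; by exists m].
- case=> [<-|[m [mJ <-]]]; [exists i; by rewrite setU11|exists m; by rewrite setU1r].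
Qed.

Lemma list_to_set B F : injective B -> NoDup F -> (forall x, In x F -> exists i, B i = x) ->
  exists J, #|J| = length F /\ img B J = sol F.
Proof.
move=> Binj; elim: F => [|x F IH] nd HF.
- exists set0; split; first by rewrite cards0.
  by apply: pext => x; split => //; case=> m []; rewrite inE.
- have [nx nd'] := proj1 (NoDup_cons_iff x F) nd.
  have [J0 [c0 E0]] := IH nd' (fun z Hz => HF z (or_intror Hz)).
  have [i Ei] := HF x (or_introl erefl).
  have iJ0 : i \notin J0.
    apply/negP => iJ; apply: nx; have : img B J0 x by exists i.
    by rewrite E0.
  exists (i |: J0); split; first by rewrite cardsU1 iJ0 c0.
  by rewrite img_U1 E0 Ei.
Qed.

Lemma exactness B B2 i : isbase B -> isbase B2 ->
  (forall j, j != i -> exists J J2, i \in J /\ j \notin J /\ span B J = span B2 J2) ->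
  exists m, B2 m = B i.
Proof.
move=> HB HB2 H.
have claim : forall l : seq 'I_n.+1, exists J J2, i \in J /\
   (forall j, j \in l -> j != i -> j \notin J) /\ span B J = span B2 J2.
  elim=> [|j l [J [J2 [iJ [Hl E]]]]].
  - exists setT, setT; split; first by rewrite inE.
    split => //; by rewrite !span_all.
  - case: (eqVneq j i) => [ji|ji].
    + exists J, J2; split => //; split => // j'; rewrite in_cons => /orP [/eqP ->|j'l].
      * by rewrite ji eqxx.
      * exact: Hl.
    + have [J' [J2' [iJ' [jJ' E']]]] := H j ji.
      exists (J :&: J'), (J2 :&: J2'); split; first by rewrite inE iJ iJ'.
      split; last by rewrite -!span_capE // E E'.
      move=> j'; rewrite in_cons inE => /orP [/eqP ->|j'l] j'i.
      * by rewrite (negbTE jJ') andbF.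
      * by rewrite (negbTE (Hl j' j'l j'i)).
have [J [J2 [iJ [Hl E]]]] := claim (enum 'I_n.+1).
have EJ : J = [set i].
  apply/setP => z; rewrite inE; case: (eqVneq z i) => [->|zi] //.
  by apply/negbTE; apply: Hl => //; rewrite mem_enum.
rewrite EJ span1 in E.
have Hi : span B2 J2 (B i) by rewrite -E.
case: (set_0Vmem J2) => [J20|[m mJ2]].
- by rewrite J20 span0 in Hi.
- exists m; have : span B2 J2 (B2 m) by apply: cl_ext; exists m.
  by rewrite -E.
Qed.

Lemma exists_out (S : P -> Prop) k u : dim L S k -> NoDup u -> (forall x, In x u -> S x) ->
  length u = k -> exists a, S a /\ ~ cl (sol u) a.
Proof.
move=> HS nd uS lu; apply: NNPP => H.
case: (HS) => Hsub [_ Hmin].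
apply: (Hmin k); first by apply/ltP.
exists u; do 2!split => //.
apply: pext => x; split; first by apply: cl_min.
by move=> Sx; apply: NNPP => nx; apply: H; exists x.
Qed.

Lemma adj_decomp k S T : 0 < k -> adjacent L k S T ->
  exists B, isbase B /\ exists (I : {set 'I_n.+1}) a b, a \notin I /\ b \notin I /\ a != b /\ #|I| = k /\
    S = span B (a |: I) /\ T = span B (b |: I).
Proof.
move=> k0 [HS [HT HST]].
have [u [ndu [lu [Hu Iu]]]] := dim_spanned HST.
have lu' : length u = k by rewrite lu prednK.
have uS : forall x, In x u -> S x /\ T x.
  move=> x Hx; have H : cl (sol u) x by apply: cl_ext.
  by rewrite Hu in H.
have [a [Sa na]] := exists_out HS ndu (fun x Hx => (uS x Hx).1) lu'.
have [b [Tb nb]] := exists_out HT ndu (fun x Hx => (uS x Hx).2) lu'.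
have Ia := indep_cons Iu na.
have Ib := indep_cons Iu nb.
have ES : cl (sol (a :: u)) = S.
  apply: fill HS Ia _ _; first by rewrite /= lu'.
  by move=> x [<-|Hx] //; exact: (uS x Hx).1.
have ET : cl (sol (b :: u)) = T.
  apply: fill HT Ib _ _; first by rewrite /= lu'.
  by move=> x [<-|Hx] //; exact: (uS x Hx).2.
have nba : ~ cl (sol (a :: u)) b.
  by rewrite ES => Sb; apply: nb; rewrite Hu.
have Iba := indep_cons Ia nba.
have [G [IG [sub [spG lG]]]] := extend Iba.
have [B [HB rng]] := list_isbase IG.1 lG IG spG.
have Binj : injective B by case: HB.
have [I [cI EI]] := list_to_set Binj ndu (fun x Hx => proj1 (rng x) (sub x (or_intror (or_intror Hx)))).
have [ia Ea] := proj1 (rng a) (sub a (or_intror (or_introl erefl))).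
have [ib Eb] := proj1 (rng b) (sub b (or_introl erefl)).
exists B; split => //; exists I, ia, ib.
have notin : forall i x, B i = x -> ~ cl (sol u) x -> i \notin I.
  move=> i x Ei nx; apply/negP => iI; apply: nx; apply: cl_ext.
  by rewrite -EI; exists i.
split; first exact: notin Ea na.
split; first exact: notin Eb nb.
split.
  apply/negP => /eqP E; have Eab : a = b by rewrite -Ea -Eb E.
  have := Iba.1 => /NoDup_cons_iff [H _]; apply: H; by left.
split; first by rewrite cI.
split.
- by rewrite -ES /span img_U1 EI Ea.
- by rewrite -ET /span img_U1 EI Eb.
Qed.

Lemma swap_base (HL : linear_space L) (HP2 : axiom_P2 L) B i j : isbase B -> i != j ->
  exists B2, isbase B2 /\ (forall J, ~~ ((i \in J) && (j \notin J)) -> span B J = span B2 J) /\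
    (forall m, B2 i <> B m).
Proof.
move=> HB ij; case: (HB) => [Binj [Bind Bsp]].
have Bij : B i <> B j by move/Binj => E; rewrite E eqxx in ij.
case: HL => _ [_ H3].
have [l [Ll [li [lj _]]]] := H3 _ _ Bij.
have [p [q [r [lp [lq [lr [pq [pr qr]]]]]]]] := HP2 l Ll.
have [c [lc [ci cj]]] : exists c, l c /\ c <> B i /\ c <> B j.
  case: (classic (p <> B i /\ p <> B j)) => [[? ?]|Hp]; first by exists p.
  case: (classic (q <> B i /\ q <> B j)) => [[? ?]|Hq]; first by exists q.
  exists r; split => //.
  have Hp' := not_and_neq Hp; have Hq' := not_and_neq Hq.
  by split => E; subst r; case: Hp' => Ep; case: Hq' => Eq; congruence.
set Z := img B (setT :\ i).
have Zm : forall m, m != i -> Z (B m).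
  by move=> m mi; exists m; rewrite !inE mi.
have lsub : forall X, cl X (B i) -> cl X (B j) -> subset l (cl X).
  by move=> X Hi Hj; exact: (line_sub (@cl_subspace X) Ll li lj Bij Hi Hj).
have lsub2 : forall X, cl X c -> cl X (B j) -> subset l (cl X).
  by move=> X Hi Hj; exact: (line_sub (@cl_subspace X) Ll lc lj cj Hi Hj).
have ncZ : ~ cl Z c.
  move=> Hc; apply: (Bind i); apply: (lsub2 Z Hc) => //.
  by apply: cl_ext; apply: Zm; rewrite eq_sym.
have cB : forall m, c <> B m.
  move=> m; case: (eqVneq m i) => [->|mi] // E; apply: ncZ; rewrite E.
  by apply: cl_ext; apply: Zm.
set B2 := fun m => if m == i then c else B m.
have B2i : B2 i = c by rewrite /B2 eqxx.
have B2m : forall m, m != i -> B2 m = B m by move=> m mi; rewrite /B2 (negbTE mi).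
exists B2; split; last split.
- split; last split.
  + move=> m1 m2; rewrite /B2.
    case: (eqVneq m1 i) => [->|m1i]; case: (eqVneq m2 i) => [->|m2i] //.
    * by move/cB.
    * by move=> E; symmetry in E; move/cB: E.
    * exact: Binj.
  + move=> m; case: (eqVneq m i) => [->|mi]; rewrite ?B2i ?B2m //.
    * move=> H; apply: ncZ; apply: cl_mono H => y [m' [m'i <-]].
      rewrite !inE andbT in m'i; rewrite B2m //; exact: Zm.
    * set W := fun y => Z y /\ y <> B m.
      move=> H.
      have H1 : cl (fun y => W y \/ y = c) (B m).
        apply: cl_mono H => y [m' [m'm <-]]; rewrite !inE andbT in m'm.
        case: (eqVneq m' i) => [->|m'i]; first by right.
        left; rewrite B2m //; split; first exact: Zm.
        by move/Binj => E; rewrite E eqxx in m'm.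
      have nW1 : ~ cl W (B m).
        move=> HW; apply: (Bind m); apply: cl_mono HW => y [[m2 [_ <-]] ym]; exists m2.
        rewrite !inE andbT; split => //; apply/negP => /eqP E; apply: ym; by rewrite E.
      have nW2 : ~ cl W c by move=> H2; apply: ncZ; apply: cl_mono H2 => y [].
      have H2 := Hex nW2 nW1 H1.
      apply: ncZ; apply: cl_mono H2 => y [[Zy _]|->]; [exact: Zy|exact: Zm].
  + move=> x; apply: cl_mono2 (Bsp x) => y [m [_ <-]].
    case: (eqVneq m i) => [->|mi].
    * apply: (lsub2 (img B2 setT)) => //; apply: cl_ext.
      -- by exists i; rewrite B2i inE.
      -- exists j; rewrite inE B2m //; by rewrite eq_sym.
    * apply: cl_ext; exists m; by rewrite inE B2m.
- move=> J HJ; case iJ : (i \in J).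
  + have jJ : j \in J by move: HJ; rewrite iJ /=; case: (j \in J).
    apply: pext => x; split; apply: cl_mono2 => y [m [mJ <-]].
    * case: (eqVneq m i) => [->|mi].
      -- apply: (lsub2 (img B2 J)) => //; apply: cl_ext.
         ++ by exists i; rewrite B2i.
         ++ exists j; rewrite B2m //; by rewrite eq_sym.
      -- apply: cl_ext; exists m; by rewrite B2m.
    * case: (eqVneq m i) => [->|mi].
      -- rewrite B2i; apply: (lsub (img B J)) => //; apply: cl_ext; by [exists i|exists j].
      -- apply: cl_ext; exists m; by rewrite B2m.
  + rewrite /span; congr cl; apply: pext => y; split => [[m [mJ <-]]|[m [mJ <-]]];
      exists m; (split => //); rewrite B2m //; apply/negP => /eqP E; by rewrite -E mJ in iJ.
- by move=> m; rewrite B2i; apply: cB.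
Qed.
End Geo.


Unset Implicit Arguments.

Theorem theorem2p5
  (P : Type) (L : (P -> Prop) -> Prop)
  (P' : Type) (L' : (P' -> Prop) -> Prop)
  (n k : nat)
  (HL : linear_space L) (HL' : linear_space L')
  (Hdim : ndim L n) (Hdim' : ndim L' n)
  (Hex : exchange_axiom L) (Hex' : exchange_axiom L')
  (HP2 : axiom_P2 L) (HP2' : axiom_P2 L')
  (Hk0 : (0 < k)%coq_nat) (Hkn : (k < n - 1)%coq_nat)
  (f : (P -> Prop) -> (P' -> Prop))
  (Hmaps : forall S, Grass L k S -> Grass L' k (f S))
  (Hinj : forall S T, Grass L k S -> Grass L k T -> f S = f T -> S = T)
  (Hbase : forall B, base L B -> exists B', base L' B' /\
      forall S', base_subset L' k B' S' <->
                 exists S, base_subset L k B S /\ f S = S') :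
  forall S T, adjacent L k S T -> adjacent L' k (f S) (f T).
Proof.
move=> S T Hadj.
have k0 : 0 < k by apply/ltP.
have kn : k.+1 + 2 <= n.+1 by move/ltP: Hkn; lia.
have [B [HB [I [a [b [aI [bI [ab [cI [ES ET]]]]]]]]]] := adj_decomp Hex Hdim k0 Hadj.
have [B'p [HB'p Heq]] := Hbase _ (isbase_base Hex Hdim HB).
have [B' [HB' EB']] := base_isbase Hex' Hdim' HB'p.
subst B'p.
pose g := fun J : {set 'I_n.+1} => odflt set0 [pick J' : {set 'I_n.+1} |
   (#|J'| == k.+1) && pb (f (span L B J) = span L' B' J')].
have gP : forall J : {set 'I_n.+1}, #|J| = k.+1 -> #|g J| = k.+1 /\ f (span L B J) = span L' B' (g J).
  move=> J cJ.
  have : base_subset L' k (img B' setT) (f (span L B J)).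
    apply/Heq; exists (span L B J); split => //.
    by apply/(basesub_char Hex Hdim _ _ HB); exists J.
  move/(basesub_char Hex' Hdim' _ _ HB') => [J' [cJ' E']].
  rewrite /g; case: pickP => [J'' /andP [/eqP c /pbE E]|Hn] //=.
  by have := Hn J'; rewrite cJ' eqxx /=; move/negbT/negP; case; apply/pbE.
have gK : forall J : {set 'I_n.+1}, #|J| = k.+1 -> #|g J| = k.+1 by move=> J /gP [].
have ginj : forall J1 J2 : {set 'I_n.+1}, #|J1| = k.+1 -> #|J2| = k.+1 -> g J1 = g J2 -> J1 = J2.
  move=> J1 J2 c1 c2 E.
  have [_ E1] := gP J1 c1; have [_ E2] := gP J2 c2.
  apply: (span_inj Hex Hdim HB); apply: Hinj.
  - exact: (span_dim Hex Hdim HB c1).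
  - exact: (span_dim Hex Hdim HB c2).
  - by rewrite E1 E2 E.
have gsurj : forall J' : {set 'I_n.+1}, #|J'| = k.+1 -> exists J : {set 'I_n.+1}, #|J| = k.+1 /\ g J = J'.
  move=> J' cJ'.
  have : base_subset L' k (img B' setT) (span L' B' J').
    by apply/(basesub_char Hex' Hdim' _ _ HB'); exists J'.
  move/Heq => [S0 [HS0 E0]].
  move/(basesub_char Hex Hdim _ _ HB): HS0 => [J [cJ ES0]].
  exists J; split => //; have [_ E1] := gP J cJ.
  apply: (span_inj Hex' Hdim' HB'); by rewrite -E1 -E0 ES0.
have Hcore : forall i j : 'I_n.+1, i != j -> exists i' j' : 'I_n.+1, i' != j' /\
  forall J : {set 'I_n.+1}, #|J| = k.+1 -> ~~ ((i \in J) && (j \notin J)) -> ~~ ((i' \in g J) && (j' \notin g J)).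
  move=> i j ij; apply: NNPP => Hn.
  have Hc : forall i' j' : 'I_n.+1, i' != j' -> exists J : {set 'I_n.+1}, #|J| = k.+1 /\
      ~~ ((i \in J) && (j \notin J)) /\ (i' \in g J) && (j' \notin g J).
    move=> i' j' ij'; apply: NNPP => nx; apply: Hn; exists i', j'; split => // J cJ HJ.
    apply/negP => H; apply: nx; exists J; split => //.
  have [B2 [HB2 [Hsp Hnew]]] := swap_base Hex Hdim HL HP2 HB ij.
  have [B2'p [HB2'p Heq2]] := Hbase _ (isbase_base Hex Hdim HB2).
  have [B2' [HB2' EB2']] := base_isbase Hex' Hdim' HB2'p.
  subst B2'p.
  have inc : forall i', exists m, B2' m = B' i'.
    move=> i'; apply: (exactness Hex' Hdim' HB' HB2') => j' ji.
    have [J [cJ [HJ /andP [i'J j'J]]]] := Hc i' j' ltac:(by rewrite eq_sym).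
    have : base_subset L' k (img B2' setT) (f (span L B J)).
      apply/Heq2; exists (span L B J); split => //.
      apply/(basesub_char Hex Hdim _ _ HB2); exists J; split => //; exact: Hsp.
    move/(basesub_char Hex' Hdim' _ _ HB2') => [J2' [_ E2]].
    exists (g J), J2'; split => //; split => //.
    by have [_ <-] := gP J cJ.
  have inc2 : forall m, exists i', B' i' = B2' m.
    move=> m; apply: NNPP => Hm.
    case: HB2' => _ [Hind2 _]; apply: (Hind2 m).
    case: HB' => _ [_ Hsp'].
    apply: (cl_mono Hex' Hdim' _ (Hsp' (B2' m))) => y [i' [_ <-]].
    have [m' Em'] := inc i'; exists m'; split => //.
    rewrite !inE andbT; apply/negP => /eqP E; subst m'; apply: Hm; by exists i'.
  have A2A : forall S0, base_subset L k (img B2 setT) S0 -> base_subset L k (img B setT) S0.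
    move=> S0 HS0.
    have : base_subset L' k (img B2' setT) (f S0) by apply/Heq2; exists S0.
    move=> [HG [Y [YB EY]]].
    have : base_subset L' k (img B' setT) (f S0).
      split => //; exists Y; split => // y /YB [m [_ <-]].
      have [i' Ei'] := inc2 m; by exists i'.
    move/Heq => [S1 [HS1 E1]].
    have -> : S0 = S1 by apply: Hinj => //; [exact: HS0.1|exact: HS1.1].
    exact: HS1.
  have [m Em] : exists m, B m = B2 i.
    apply: (exactness Hex Hdim HB2 HB) => j0 j0i.
    have h1 : [set i] :&: [set j0] = set0.
      apply/setP => z; rewrite !inE; case: (eqVneq z i) => [->|] //=.
      by rewrite eq_sym (negbTE j0i).
    have h2 : #|[set i]| <= k.+1 by rewrite cards1.
    have h3 : k.+1 + #|[set j0]| <= n.+1 by rewrite cards1; lia.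
    have [J [cJ [sJ dJ]]] := exists_Kset h1 h2 h3.
    have : base_subset L k (img B2 setT) (span L B2 J).
      by apply/(basesub_char Hex Hdim _ _ HB2); exists J.
    move/A2A/(basesub_char Hex Hdim _ _ HB) => [J2 [_ E2]].
    exists J, J2; split; first by apply: (subsetP sJ); rewrite set11.
    split; last by [].
    apply/negP => j0J; have : j0 \in J :&: [set j0] by rewrite !inE j0J eqxx.
    by rewrite dJ inE.
  by apply: (Hnew m).
set SJ := a |: I. set TJ := b |: I.
have cSJ : #|SJ| = k.+1 by rewrite /SJ cardsU1 aI cI.
have cTJ : #|TJ| = k.+1 by rewrite /TJ cardsU1 bI cI.
have cST : #|SJ :&: TJ| = (k.+1).-1.
  have -> : SJ :&: TJ = I.
    apply/setP => z; rewrite !inE; case: (eqVneq z a) => [->|za].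
    - by rewrite (negbTE ab) (negbTE aI).
    - case: (eqVneq z b) => [->|zb] /=; last by rewrite andbb.
      by rewrite (negbTE bI) /=; case: (b == a).
  by rewrite cI.
have := core (N := n.+1) (K := k.+1) ltac:(lia) kn gK ginj gsurj Hcore cSJ cTJ cST.
move=> Hc.
have [HS [HT _]] := Hadj.
split; first exact: Hmaps.
split; first exact: Hmaps.
have [_ E1] := gP SJ cSJ; have [_ E2] := gP TJ cTJ.
rewrite ES ET E1 E2 (span_capE Hex' Hdim' _ _ HB').
apply: (span_dim Hex' Hdim' HB'); rewrite Hc /=; lia.
Qed.
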